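(* Let $n\geq 3$ and let $C_n^*$ be the bigraded complex described in the context. Let $D$ be a bigraded $S^3$-knotlike chain complex over $R$ and let $f\colon C_n^*\to D$ be a local map. Then there does not exist a local map $g\colon D\to C_n^*$ such that $g\circ f$ is homogeneous of bigrading $(c_1,c_2)$ with $c_1>-2n+2$ and $c_2>-2n$.
   Context: Let $\mathbb{F}=\mathbb{Z}/2$ and $R=\mathbb{F}[\mathcal{U},\mathcal{V}]$, bigraded by $(\operatorname{gr}_{\mathcal{U}},\operatorname{gr}_{\mathcal{V}})$ with $\mathcal{U}$ of bigrading $(-2,0)$ and $\mathcal{V}$ of bigrading $(0,-2)$; complexes have differentials of bigrading $(-1,-1)$. A local map between complexes over $R$ is an $R$-linear homogeneous chain map inducing an isomorphism on homology after localizing at $\mathcal{U}$ and $\mathcal{V}$ (i.e. after tensoring with $\mathbb{F}[\mathcal{U},\mathcal{V},\mathcal{U}^{-1},\mathcal{V}^{-1}]$). A map is homogeneous of bigrading $(c_1,c_2)$ if it sends elements of bigrading $(a,b)$ to elements of bigrading $(a+c_1,b+c_2)$. A complex $D$ over $R$ is $S^3$-knotlike if $H_*(D\otimes_R\mathbb{F}[\mathcal{U}])\cong\mathbb{F}[\mathcal{U}]$, where $\mathcal{V}$ acts on $\mathbb{F}[\mathcal{U}]$ as $1$. For $n\geq 3$, $C_n^*$ is the free $R$-module with basis $\alpha^*_s$ ($1\leq s\leq 2n-1$); $\widetilde{\alpha}^*_s$ ($1\leq s\leq n-2$ and $n+1\leq s\leq 2n-2$); $b^{*,(s)}_{n-1}$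 ($1\leq s\leq n-2$); $b^{*,(s)}_{n}$ ($1\leq s\leq 2n-2$); $b^{*,(s)}_{n+1}$ ($n+1\leq s\leq 2n-2$), with $R$-linear differential $\partial$ given by $\partial\alpha^*_s=0$, $\partial\widetilde{\alpha}^*_s=0$, and $\partial b^{*,(s)}_{n-1}=\mathcal{U}^{n(n-1)/2}\mathcal{V}^{n(n-1)/2}\alpha^*_s+\mathcal{V}^{n-s-1}\widetilde{\alpha}^*_s$ for $1\leq s\leq n-2$; $\partial b^{*,(s)}_{n}=\mathcal{U}^{n(n+1)/2-s}\mathcal{V}^{n(n+1)/2}\alpha^*_{s+1}+\mathcal{U}^{n}\widetilde{\alpha}^*_s$ for $1\leq s\leq n-2$; $\partial b^{*,(s)}_{n}=\mathcal{U}^{n(n+1)/2}\mathcal{V}^{n(n-1)/2-n+s+1}\alpha^*_s+\mathcal{U}^{n(n+1)/2-s}\mathcal{V}^{n(n+1)/2}\alpha^*_{s+1}$ for $n-1\leq s\leq n$; $\partial b^{*,(s)}_{n}=\mathcal{U}^{n(n+1)/2}\mathcal{V}^{n(n-1)/2-n+s+1}\alpha^*_s+\mathcal{V}^{n}\widetilde{\alpha}^*_s$ for $n+1\leq s\leq 2n-2$; $\partial b^{*,(s)}_{n+1}=\mathcal{U}^{n(n-1)/2}\mathcal{V}^{n(n-1)/2}\alpha^*_{s+1}+\mathcal{U}^{s-n}\widetilde{\alpha}^*_s$ for $n+1\leq s\leq 2n-2$. The basis elements are assigned bigradings so that $\partial$ is homogeneous of bigrading $(-1,-1)$ (unique up to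 an overall shift; any such choice is fixed). *)

(* Defs.v *)
From HB Require Import structures.
From mathcomp Require Import all_boot all_order all_algebra fraction.
Set Implicit Arguments. Unset Strict Implicit. Unset Printing Implicit Defensive.
Import Order.TTheory GRing.Theory Num.Theory.
Local Open Scope ring_scope.

(* F = Z/2, R = F[U,V], realised as F[U][V]: V is the outer variable. *)
Definition F2 : fieldType := 'F_2.
Definition R : idomainType := {poly {poly F2}}.
Definition Uvar : R := ('X : {poly F2})%:P.
Definition Vvar : R := 'X.
(* The monomial U^a V^b, of bigrading (-2a, -2b). *)
Definition mono (a b : nat) : R := Uvar ^+ a * Vvar ^+ b.

(* A bigraded free finitely generated R-module is given by a finite basis
   X and a bigrading gr : X -> int * int of the basis elements.
   An R-linear map phi between such modules is given by its coefficients: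
   phi x = \sum_y phi x y * y. *)
Definition homogeneous (X Y : finType) (grX : X -> int * int)
  (grY : Y -> int * int) (phi : X -> Y -> R) (c : int * int) : Prop :=
  forall x y, phi x y = 0 \/
    exists a b : nat, phi x y = mono a b /\
      (grY y).1 - (2 * a)%:Z = (grX x).1 + c.1 /\
      (grY y).2 - (2 * b)%:Z = (grX x).2 + c.2.

Definition mcomp (X Y Z : finType) (phi : X -> Y -> R) (psi : Y -> Z -> R) :
  X -> Z -> R := fun x z => \sum_y phi x y * psi y z.

Definition is_complex (X : finType) (gr : X -> int * int) (d : X -> X -> R) :=
  homogeneous gr gr d (-1, -1) /\ forall x z, mcomp d d x z = 0.

Definition chain_map (X Y : finType) (dX : X -> X -> R) (dY : Y -> Y -> R)
  (phi : X -> Y -> R) := forall x z, mcomp dX phi x z = mcomp phi dY x z.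

(* Localisation at U and V: F[U,V,U^-1,V^-1], realised inside the
   fraction field of R as the elements r / (U^a V^b). *)
Definition K := {fraction R}.
Definition toK (r : R) : K := FracField.tofrac r.
Definition inL (k : K) : Prop :=
  exists (a b : nat) (r : R), toK (mono a b) * k = toK r.

(* Applying a map (given by coefficients) to an element of the localised
   module (L tensor_R free module), an element being a function X -> K
   with values in L. *)
Definition lapp (X Y : finType) (phi : X -> Y -> R) (v : X -> K) : Y -> K :=
  fun y => \sum_x v x * toK (phi x y).

Definition lvec (X : finType) (v : X -> K) := forall x, inL (v x).

(* phi induces an isomorphism on homology after localisation: the induced
   map [w] |-> [phi w] on H_*(L (x) X) -> H_*(L (x) Y) is surjective and
   injective. *)
Definition loc_iso (X Y : finType) (dX : X -> X -> R) (dY : Y -> Y -> R)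
  (phi : X -> Y -> R) : Prop :=
  (forall z : Y -> K, lvec z -> (forall y, lapp dY z y = 0) ->
     exists (w : X -> K) (u : Y -> K), lvec w /\ lvec u /\
       (forall x, lapp dX w x = 0) /\
       (forall y, lapp phi w y - z y = lapp dY u y)) /\
  (forall w : X -> K, lvec w -> (forall x, lapp dX w x = 0) ->
     (exists u : Y -> K, lvec u /\ forall y, lapp phi w y = lapp dY u y) ->
     exists t : X -> K, lvec t /\ forall x, w x = lapp dX t x).

Definition local_map (X Y : finType) (grX : X -> int * int) (dX : X -> X -> R)
  (grY : Y -> int * int) (dY : Y -> Y -> R) (phi : X -> Y -> R) : Prop :=
  (exists c, homogeneous grX grY phi c) /\ chain_map dX dY phi /\
  loc_iso dX dY phi.

(* Tensoring with F[U] where V acts as 1: apply r |-> r(V := 1). *)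
Definition setV1 (r : R) : {poly F2} := r.[1].
Definition uapp (X Y : finType) (phi : X -> Y -> R) (v : X -> {poly F2}) :
  Y -> {poly F2} := fun y => \sum_x v x * setV1 (phi x y).

(* S^3-knotlike: H_*(D (x)_R F[U]) is isomorphic to F[U] as an
   F[U]-module, i.e. it is free of rank one, generated by the class of
   some cycle z (the image of 1 under the isomorphism). *)
Definition knotlike (X : finType) (d : X -> X -> R) : Prop :=
  exists z : X -> {poly F2}, (forall x, uapp d z x = 0) /\
    (forall y : X -> {poly F2}, (forall x, uapp d y x = 0) ->
       exists (p : {poly F2}) (u : X -> {poly F2}),
         forall x, y x = p * z x + uapp d u x) /\
    (forall (p : {poly F2}) (u : X -> {poly F2}),
       (forall x, p * z x = uapp d u x) -> p = 0).

Inductive ckind := KA | KAt | KB1 | KB2 | KB3.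
(* KA = alpha^*, KAt = tilde alpha^*, KB1 = b_{n-1}^*, KB2 = b_n^*,
   KB3 = b_{n+1}^*. *)
Definition ckind2o (k : ckind) : 'I_5 :=
  match k with KA => inord 0 | KAt => inord 1 | KB1 => inord 2
  | KB2 => inord 3 | KB3 => inord 4 end.
Definition o2ckind (i : 'I_5) : ckind :=
  match val i with 0 => KA | 1 => KAt | 2 => KB1 | 3 => KB2 | _ => KB3 end.
Lemma ckindK : cancel ckind2o o2ckind.
Proof. by case; rewrite /o2ckind /= inordK. Qed.
HB.instance Definition _ := Finite.copy ckind (can_type ckindK).

Arguments ckindK : clear implicits.
Definition cvalid (n : nat) (x : ckind * 'I_(2 * n)) : bool :=
  let s := val x.2 in
  match x.1 with
  | KA => (1 <= s <= 2 * n - 1)%N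
  | KAt => (1 <= s <= n - 2)%N || (n + 1 <= s <= 2 * n - 2)%N
  | KB1 => (1 <= s <= n - 2)%N
  | KB2 => (1 <= s <= 2 * n - 2)%N
  | KB3 => (n + 1 <= s <= 2 * n - 2)%N
  end.

Arguments cvalid n x : clear implicits.
Definition Cgen (n : nat) : finType := {x : ckind * 'I_(2 * n) | cvalid n x}.

Definition dC (n : nat) (x y : Cgen n) : R :=
  let N := ((n * (n - 1)) %/ 2)%N in
  let M := ((n * (n + 1)) %/ 2)%N in
  let s := val (val x).2 in
  let t := val (val y).2 in
  match (val x).1, (val y).1 with
  | KB1, KA => if t == s then mono N N else 0
  | KB1, KAt => if t == s then mono 0 (n - s - 1)%N else 0
  | KB2, KA =>
      if (s <= n - 2)%N then (if t == s.+1 then mono (M - s)%N M else 0)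
      else if (s <= n)%N then
        (if t == s then mono M (N + s + 1 - n)%N
         else if t == s.+1 then mono (M - s)%N M else 0)
      else (if t == s then mono M (N + s + 1 - n)%N else 0)
  | KB2, KAt =>
      if (s <= n - 2)%N && (t == s) then mono n 0
      else if (n + 1 <= s)%N && (t == s) then mono 0 n else 0
  | KB3, KA => if t == s.+1 then mono N N else 0
  | KB3, KAt => if t == s then mono (s - n)%N 0 else 0
  | _, _ => 0
  end.
Arguments dC n x y : clear implicits.

(* Main.v *)
Require Import Defs.
From HB Require Import structures.
From mathcomp Require Import all_boot all_order all_algebra fraction.
From mathcomp Require Import zify ring.
Import Order.TTheory GRing.Theory Num.Theory.
Local Open Scope ring_scope.

Lemma monoE a b : mono a b = ('X^a : {poly F2})%:P * 'X^b.
Proof. by rewrite /mono /Uvar /Vvar rmorphXn. Qed.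

Lemma coef_mono a b j : (mono a b)`_j = if j == b then 'X^a else 0.
Proof. by rewrite monoE coefCM coefXn; case: eqP => _; rewrite ?mulr1 ?mulr0. Qed.

Lemma mono_neq0 a b : mono a b != 0.
Proof.
apply/eqP => h. have := coef_mono a b b. rewrite h coef0 eqxx => /esym/eqP.
by rewrite -size_poly_eq0 size_polyXn.
Qed.

Lemma monoI {a b a' b'} : mono a b = mono a' b' -> a = a' /\ b = b'.
Proof.
move=> h.
have hb : b = b'.
  have := coef_mono a b b; rewrite h coef_mono eqxx.
  case: eqP => // _ h0; have : ('X^a : {poly F2}) != 0 by rewrite -size_poly_eq0 size_polyXn.
  by rewrite -h0 eqxx.
subst b'; split=> //.
have := coef_mono a b b; rewrite h coef_mono eqxx => h1.
have := size_polyXn F2 a; rewrite -h1 size_polyXn. by case.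
Qed.

Lemma setV1_mono a b : setV1 (mono a b) = 'X^a.
Proof. by rewrite /setV1 monoE hornerCM hornerXn expr1n mulr1. Qed.

Lemma setV1D x y : setV1 (x + y) = setV1 x + setV1 y.
Proof. by rewrite /setV1 hornerD. Qed.
Lemma setV1M x y : setV1 (x * y) = setV1 x * setV1 y.
Proof. by rewrite /setV1 hornerM. Qed.
Lemma setV1_sum (I : finType) (F : I -> R) : setV1 (\sum_i F i) = \sum_i setV1 (F i).
Proof. by rewrite /setV1 horner_sum. Qed.
Lemma setV10 : setV1 0 = 0. Proof. by rewrite /setV1 horner0. Qed.

Definition ev (r : R) : F2 := (setV1 r).[1].
Lemma evD x y : ev (x + y) = ev x + ev y.
Proof. by rewrite /ev setV1D hornerD. Qed.
Lemma evM x y : ev (x * y) = ev x * ev y.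
Proof. by rewrite /ev setV1M hornerM. Qed.
Lemma ev_sum (I : finType) (F : I -> R) : ev (\sum_i F i) = \sum_i ev (F i).
Proof. by rewrite /ev setV1_sum horner_sum. Qed.
Lemma ev_prod (I : finType) (F : I -> R) : ev (\prod_i F i) = \prod_i ev (F i).
Proof.
elim/big_rec2: _ => [|i x y _ <-]; first by rewrite /ev /setV1 !hornerC.
by rewrite evM.
Qed.
Lemma ev0 : ev 0 = 0. Proof. by rewrite /ev setV10 horner0. Qed.
Lemma ev_mono a b : ev (mono a b) = 1.
Proof. by rewrite /ev setV1_mono hornerXn expr1n. Qed.
Lemma F2_11 : (1 + 1 : F2) = 0. Proof. by apply/eqP. Qed.
Lemma F2_10 : (1 : F2) != 0. Proof. exact: oner_neq0. Qed.
Lemma toKM (x y : R) : toK (x * y) = toK x * toK y.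
Proof. by rewrite /toK rmorphM. Qed.
Lemma toK_sum (I : finType) (F : I -> R) : toK (\sum_i F i) = \sum_i toK (F i).
Proof. by rewrite /toK rmorph_sum. Qed.
Lemma toK_inj (x y : R) : toK x = toK y -> x = y.
Proof. by move=> /eqP; rewrite /toK tofrac_eq => /eqP. Qed.
Lemma toK0 : toK 0 = 0. Proof. by rewrite /toK rmorph0. Qed.
Lemma toK1 : toK 1 = 1. Proof. by rewrite /toK rmorph1. Qed.
Definition NN (n : nat) := ((n * (n - 1)) %/ 2)%N.
Definition MM (n : nat) := ((n * (n + 1)) %/ 2)%N.

Lemma MM_NN n : MM n = (NN n + n)%N.
Proof.
rewrite /MM /NN; case: n => [//|n].
rewrite subn1 /= (_ : (n.+1 * (n.+1 + 1) = n.+1 * n + 2 * n.+1)%N); last by ring.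
by rewrite divnDr ?dvdn_mulr // mulKn.
Qed.

Lemma NN_ge {n} : (3 <= n)%N -> (n <= NN n)%N.
Proof.
move=> hn; rewrite /NN.
have : (2 * n <= n * (n - 1))%N by rewrite mulnC leq_mul2l; apply/orP; right; lia.
move=> h; have := leq_div2r 2 h; by rewrite mulKn.
Qed.

Definition cv (n : nat) (k : ckind) (s : nat) : bool :=
  match k with
  | KA => (1 <= s <= 2 * n - 1)%N
  | KAt => (1 <= s <= n - 2)%N || (n + 1 <= s <= 2 * n - 2)%N
  | KB1 => (1 <= s <= n - 2)%N
  | KB2 => (1 <= s <= 2 * n - 2)%N
  | KB3 => (n + 1 <= s <= 2 * n - 2)%N
  end.

Definition isg n (x : Cgen n) (k : ckind) (s : nat) : Prop :=
  (val x).1 = k /\ val (val x).2 = s.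
Arguments isg {n}.

Lemma exists_gen n k s : (1 <= n)%N -> cv n k s -> exists x : Cgen n, isg x k s.
Proof.
move=> h1 hv.
have hs : (s < 2 * n)%N by case: k hv => /=; lia.
have hv' : cvalid n (k, Ordinal hs) by [].
by exists (exist _ (k, Ordinal hs) hv').
Qed.

Lemma gen_eq n (x y : Cgen n) k s : isg x k s -> isg y k s -> x = y.
Proof.
case: x => [[kx tx] hx] [/= h1 h2]; case: y => [[ky ty] hy] [/= h3 h4].
apply: val_inj => /=; subst; congr pair; exact: val_inj.
Qed.

Lemma gen_valid n (x : Cgen n) : cv n (val x).1 (val (val x).2).
Proof. by case: x => [[k t] h]. Qed.

Definition dCf (n : nat) (kx : ckind) (s : nat) (ky : ckind) (t : nat) : R :=
  let N := NN n in
  let M := MM n in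
  match kx, ky with
  | KB1, KA => if t == s then mono N N else 0
  | KB1, KAt => if t == s then mono 0 (n - s - 1)%N else 0
  | KB2, KA =>
      if (s <= n - 2)%N then (if t == s.+1 then mono (M - s)%N M else 0)
      else if (s <= n)%N then
        (if t == s then mono M (N + s + 1 - n)%N
         else if t == s.+1 then mono (M - s)%N M else 0)
      else (if t == s then mono M (N + s + 1 - n)%N else 0)
  | KB2, KAt =>
      if (s <= n - 2)%N && (t == s) then mono n 0
      else if (n + 1 <= s)%N && (t == s) then mono 0 n else 0
  | KB3, KA => if t == s.+1 then mono N N else 0
  | KB3, KAt => if t == s then mono (s - n)%N 0 else 0
  | _, _ => 0
  end.

Lemma dC_f n x y : dC n x y = dCf n (val x).1 (val (val x).2) (val y).1 (val (val y).2).
Proof. by []. Qed.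

Lemma dC_isg n x y kx s ky t : isg x kx s -> isg y ky t -> dC n x y = dCf n kx s ky t.
Proof. by move=> [h1 h2] [h3 h4]; rewrite dC_f h1 h2 h3 h4. Qed.

Arguments dC_isg {n x y kx s ky t}.
Arguments gen_eq {n x y k s}.


Section Grading.
Variable n : nat.
Hypothesis hn : (3 <= n)%N.
Variable grC : Cgen n -> int * int.
Hypothesis hgrC : homogeneous grC grC (dC n) (-1, -1).

Let X (y : Cgen n) : int := (grC y).1.
Let Y (y : Cgen n) : int := (grC y).2.

Lemma edge {x y kx s ky t a c} : isg x kx s -> isg y ky t ->
  dCf n kx s ky t = mono a c ->
  X y - (2 * a)%:Z = X x - 1 /\ Y y - (2 * c)%:Z = Y x - 1.
Proof.
move=> hx hy hd; rewrite -(dC_isg hx hy) in hd.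
case: (hgrC x y) => [h0|[a' [b' [h1 [h2 h3]]]]].
  by move: (mono_neq0 a c); rewrite -hd h0 eqxx.
rewrite hd in h1; case: (monoI h1) => -> ->; split; [exact: h2 | exact: h3].
Qed.

Let gen k s (h : cv n k s) := @exists_gen n k s (leq_trans (isT : (1 <= 3)%N) hn) h.

Lemma gF1 s x y : (1 <= s <= n - 2)%N -> isg x KA s -> isg y KA s.+1 -> Y x <= Y y.
Proof.
move=> hs hx hy.
have [b1 hb1] := @gen KB1 s hs.
have [tt htt] := @gen KAt s (introT orP (or_introl hs)).
have [b2 hb2] := @gen KB2 s (ltac:(rewrite /cv; lia)).
have d1 : dCf n KB1 s KA s = mono (NN n) (NN n) by rewrite /dCf eqxx.
have d2 : dCf n KB1 s KAt s = mono 0 (n - s - 1) by rewrite /dCf eqxx.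
have d3 : dCf n KB2 s KAt s = mono n 0.
  by rewrite /dCf eqxx andbT (_ : (s <= n - 2)%N = true) //; lia.
have d4 : dCf n KB2 s KA s.+1 = mono (MM n - s) (MM n).
  by rewrite /dCf (_ : (s <= n - 2)%N = true) ?eqxx //; lia.
have [_ e1] := edge hb1 hx d1.
have [_ e2] := edge hb1 htt d2.
have [_ e3] := edge hb2 htt d3.
have [_ e4] := edge hb2 hy d4.
have := MM_NN n; have := NN_ge hn; lia.
Qed.

Ltac fx P b := rewrite (_ : P = b); last lia.

Lemma gF2 x y : isg x KA (n - 1) -> isg y KA n -> Y x = Y y - (2 * n)%:Z.
Proof.
move=> hx hy.
have [b hb] := @gen KB2 (n - 1) (ltac:(rewrite /cv; lia)).
have d1 : dCf n KB2 (n - 1) KA (n - 1) = mono (MM n) (NN n + (n - 1) + 1 - n).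
  rewrite /dCf; fx (n - 1 <= n - 2)%N false; fx (n - 1 <= n)%N true.
  by rewrite eqxx.
have d2 : dCf n KB2 (n - 1) KA n = mono (MM n - (n - 1)) (MM n).
  rewrite /dCf; fx (n - 1 <= n - 2)%N false; fx (n - 1 <= n)%N true.
  fx (n == n - 1)%N false; fx (n == (n - 1).+1)%N true; by [].
have [_ e1] := edge hb hx d1.
have [_ e2] := edge hb hy d2.
have := MM_NN n; have := NN_ge hn; lia.
Qed.

Lemma gF3 x y : isg x KA n -> isg y KA n.+1 -> X y = X x - (2 * n)%:Z.
Proof.
move=> hx hy.
have [b hb] := @gen KB2 n (ltac:(rewrite /cv; lia)).
have d1 : dCf n KB2 n KA n = mono (MM n) (NN n + n + 1 - n).
  by rewrite /dCf; fx (n <= n - 2)%N false; rewrite leqnn eqxx.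
have d2 : dCf n KB2 n KA n.+1 = mono (MM n - n) (MM n).
  rewrite /dCf; fx (n <= n - 2)%N false; rewrite leqnn.
  fx (n.+1 == n)%N false; by rewrite eqxx.
have [e1 _] := edge hb hx d1.
have [e2 _] := edge hb hy d2.
have := MM_NN n; have := NN_ge hn; lia.
Qed.

Lemma gF4 s x y : (n + 1 <= s <= 2 * n - 2)%N -> isg x KA s -> isg y KA s.+1 -> X y <= X x.
Proof.
move=> hs hx hy.
have [b2 hb2] := @gen KB2 s (ltac:(rewrite /cv; lia)).
have [b3 hb3] := @gen KB3 s hs.
have [tt htt] := @gen KAt s (introT orP (or_intror hs)).
have d1 : dCf n KB2 s KA s = mono (MM n) (NN n + s + 1 - n).
  by rewrite /dCf; fx (s <= n - 2)%N false; fx (s <= n)%N false; rewrite eqxx.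
have d2 : dCf n KB2 s KAt s = mono 0 n.
  by rewrite /dCf eqxx !andbT; fx (s <= n - 2)%N false; fx (n + 1 <= s)%N true.
have d3 : dCf n KB3 s KAt s = mono (s - n) 0 by rewrite /dCf eqxx.
have d4 : dCf n KB3 s KA s.+1 = mono (NN n) (NN n) by rewrite /dCf eqxx.
have [e1 _] := edge hb2 hx d1.
have [e2 _] := edge hb2 htt d2.
have [e3 _] := edge hb3 htt d3.
have [e4 _] := edge hb3 hy d4.
have := MM_NN n; have := NN_ge hn; lia.
Qed.

Lemma gG1 s x z : (1 <= s <= n - 1)%N -> isg x KA s -> isg z KA (n - 1) -> Y x <= Y z.
Proof.
move=> hs; move: {2}(n - 1 - s)%N (erefl (n - 1 - s)%N) => k.
elim: k s x hs => [|k IH] s x hs hk hx hz.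
  have hz' : isg z KA s by move: hz; rewrite /isg => -[-> ->]; split=> //; lia.
  by rewrite (gen_eq hx hz').
have [y hy] := @gen KA s.+1 (ltac:(rewrite /cv; lia)).
have hs' : (1 <= s <= n - 2)%N by lia.
have h1 := gF1 s x y hs' hx hy.
have h2 : Y y <= Y z by apply: (IH s.+1) => //; lia.
lia.
Qed.

Lemma gG2 s x z : (n + 1 <= s <= 2 * n - 1)%N -> isg x KA s -> isg z KA n.+1 -> X x <= X z.
Proof.
move=> hs; move: {2}(s - (n + 1))%N (erefl (s - (n + 1))%N) => k.
elim: k s x hs => [|k IH] s x hs hk hx hz.
  have hz' : isg z KA s by move: hz; rewrite /isg => -[-> ->]; split=> //; lia.
  by rewrite (gen_eq hx hz').
have [y hy] := @gen KA s.-1 (ltac:(rewrite /cv; lia)).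
have hy' : isg x KA (s.-1).+1 by rewrite prednK //; lia.
have hs' : (n + 1 <= s.-1 <= 2 * n - 2)%N by lia.
have h1 := gF4 s.-1 y x hs' hy hy'.
have h2 : X y <= X z by apply: (IH s.-1) => //; lia.
lia.
Qed.


Lemma gbound y an : isg an KA n -> y <> an ->
  X y <= X an - (2 * n)%:Z \/ Y y <= Y an - (2 * n)%:Z.
Proof.
move=> han hne.
have [k [t hy]] : exists k t, isg y k t by exists (val y).1, (val (val y).2).
have hv : cv n k t by case: hy => <- <-; exact: gen_valid.
have [za hza] := @gen KA (n - 1) (ltac:(rewrite /cv; lia)).
have [zb hzb] := @gen KA n.+1 (ltac:(rewrite /cv; lia)).
have hF2 := gF2 za an hza han; have hF3 := gF3 an zb han hzb.
have hMN := MM_NN n; have hN := NN_ge hn.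
case: k hy hv => hy /= hv.
- case: (ltngtP t n) => htn.
  + right; have := gG1 t y za (ltac:(lia)) hy hza; lia.
  + left; have := gG2 t y zb (ltac:(lia)) hy hzb; lia.
  + by subst t; case: hne; exact: gen_eq hy han.
- case/orP: hv => hv.
  + right.
    have [b hb] := @gen KB2 t (ltac:(rewrite /cv; lia)).
    have [a ha] := @gen KA t.+1 (ltac:(rewrite /cv; lia)).
    have d1 : dCf n KB2 t KAt t = mono n 0.
      by rewrite /dCf eqxx !andbT; fx (t <= n - 2)%N true.
    have d2 : dCf n KB2 t KA t.+1 = mono (MM n - t) (MM n).
      by rewrite /dCf; fx (t <= n - 2)%N true; rewrite eqxx.
    have [_ e1] := edge hb hy d1; have [_ e2] := edge hb ha d2.
    have := gG1 t.+1 a za (ltac:(lia)) ha hza; lia.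
  + left.
    have [b hb] := @gen KB2 t (ltac:(rewrite /cv; lia)).
    have [a ha] := @gen KA t (ltac:(rewrite /cv; lia)).
    have d1 : dCf n KB2 t KA t = mono (MM n) (NN n + t + 1 - n).
      by rewrite /dCf; fx (t <= n - 2)%N false; fx (t <= n)%N false; rewrite eqxx.
    have d2 : dCf n KB2 t KAt t = mono 0 n.
      by rewrite /dCf eqxx !andbT; fx (t <= n - 2)%N false; fx (n + 1 <= t)%N true.
    have [e1 _] := edge hb ha d1; have [e2 _] := edge hb hy d2.
    have := gG2 t a zb (ltac:(lia)) ha hzb; lia.
- right.
  have [a ha] := @gen KA t (ltac:(rewrite /cv; lia)).
  have d1 : dCf n KB1 t KA t = mono (NN n) (NN n) by rewrite /dCf eqxx.
  have [_ e1] := edge hy ha d1.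
  have := gG1 t a za (ltac:(lia)) ha hza; lia.
- case: (leqP t (n - 2)) => h1.
    right.
    have [a ha] := @gen KA t.+1 (ltac:(rewrite /cv; lia)).
    have d1 : dCf n KB2 t KA t.+1 = mono (MM n - t) (MM n).
      by rewrite /dCf h1 eqxx.
    have [_ e1] := edge hy ha d1.
    have := gG1 t.+1 a za (ltac:(lia)) ha hza; lia.
  case: (leqP t n) => h2.
    right.
    case: (ltngtP t n) => h3.
    + have ht : t = (n - 1)%N by lia.
      rewrite ht in hy.
      have d1 : dCf n KB2 (n - 1) KA n = mono (MM n - (n - 1)) (MM n).
        rewrite /dCf; fx (n - 1 <= n - 2)%N false; fx (n - 1 <= n)%N true.
        fx (n == n - 1)%N false; fx (n == (n - 1).+1)%N true; by [].
      have [_ e1] := edge hy han d1; lia.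
    + lia.
    + subst t.
      have d1 : dCf n KB2 n KA n = mono (MM n) (NN n + n + 1 - n).
        by rewrite /dCf; fx (n <= n - 2)%N false; rewrite leqnn eqxx.
      have [_ e1] := edge hy han d1; lia.
  left.
  have [a ha] := @gen KA t (ltac:(rewrite /cv; lia)).
  have d1 : dCf n KB2 t KA t = mono (MM n) (NN n + t + 1 - n).
    by rewrite /dCf; fx (t <= n - 2)%N false; fx (t <= n)%N false; rewrite eqxx.
  have [e1 _] := edge hy ha d1.
  have := gG2 t a zb (ltac:(lia)) ha hzb; lia.
- left.
  have [a ha] := @gen KA t.+1 (ltac:(rewrite /cv; lia)).
  have d1 : dCf n KB3 t KA t.+1 = mono (NN n) (NN n) by rewrite /dCf eqxx.
  have [e1 _] := edge hy ha d1.
  have := gG2 t.+1 a zb (ltac:(lia)) ha hzb; lia.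
Qed.

End Grading.

Lemma sum2 {I : finType} {F : I -> F2} {i j} : i != j ->
  (forall k, k != i -> k != j -> F k = 0) -> \sum_k F k = F i + F j.
Proof.
move=> hij h; rewrite (bigD1 i) //= (bigD1 j) /=; last by rewrite eq_sym.
rewrite big1 ?addr0 // => k /andP [h1 h2]; exact: h.
Qed.

Lemma isg_self {n} (y : Cgen n) : isg y (val y).1 (val (val y).2).
Proof. by []. Qed.

Lemma isg_neq {n} {x y : Cgen n} {k s k' s'} : isg x k s -> isg y k' s' ->
  (k <> k' \/ s <> s') -> x != y.
Proof.
move=> [h1 h2] [h3 h4] h; apply/eqP => e; subst y.
by case: h => h; apply: h; [rewrite -h1 -h3 | rewrite -h2 -h4].
Qed.

Lemma dC_isgx {n x kx s} y : isg x kx s -> dC n x y = dCf n kx s (val y).1 (val (val y).2).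
Proof. by move=> [h1 h2]; rewrite dC_f h1 h2. Qed.

Ltac kill y y1 hy1 y2 hy2 n1 n2 :=
  first [ by rewrite ev0
        | exfalso; move/negP: n1; apply; apply/eqP; apply: (gen_eq (isg_self y) _); 
          move: hy1; rewrite /isg => -[-> ->]; split=> //; lia
        | exfalso; move/negP: n2; apply; apply/eqP; apply: (gen_eq (isg_self y) _); 
          move: hy2; rewrite /isg => -[-> ->]; split=> //; lia ].

Lemma ev_sum_dC n (hn : (3 <= n)%N) (x : Cgen n) : ev (\sum_y dC n x y) = 0.
Proof.
have gen k s (h : cv n k s) := @exists_gen n k s (leq_trans (isT : (1 <= 3)%N) hn) h.
rewrite ev_sum.
have [k [s hx]] : exists k s, isg x k s by exists (val x).1, (val (val x).2).
have hv : cv n k s by case: hx => <- <-; exact: gen_valid.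
have two : forall y1 y2 k1 s1 k2 s2, isg y1 k1 s1 -> isg y2 k2 s2 -> (k1 <> k2 \/ s1 <> s2) ->
    ev (dC n x y1) = 1 -> ev (dC n x y2) = 1 ->
    (forall y, y != y1 -> y != y2 -> ev (dC n x y) = 0) -> \sum_y ev (dC n x y) = 0.
  move=> y1 y2 k1 s1 k2 s2 h1 h2 hne e1 e2 h.
  by rewrite (sum2 (isg_neq h1 h2 hne) h) e1 e2 F2_11.
case: k hx hv => hx /= hv.
- by rewrite big1 // => y _; rewrite (dC_isgx _ hx) /dCf; case: (val y).1; rewrite ev0.
- by rewrite big1 // => y _; rewrite (dC_isgx _ hx) /dCf; case: (val y).1; rewrite ev0.
- have [y1 hy1] := @gen KA s (ltac:(rewrite /cv; lia)).
  have [y2 hy2] := @gen KAt s (ltac:(rewrite /cv; lia)).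
  apply: (two y1 y2 _ _ _ _ hy1 hy2); first by left.
  + by rewrite (dC_isg hx hy1) /dCf eqxx ev_mono.
  + by rewrite (dC_isg hx hy2) /dCf eqxx ev_mono.
  move=> y n1 n2; rewrite (dC_isgx _ hx) /dCf.
  case E: (val y).1; repeat case: ifP => ?; kill y y1 hy1 y2 hy2 n1 n2.
- case: (leqP s (n - 2)) => hs1.
    have [y1 hy1] := @gen KA s.+1 (ltac:(rewrite /cv; lia)).
    have [y2 hy2] := @gen KAt s (ltac:(rewrite /cv; lia)).
    apply: (two y1 y2 _ _ _ _ hy1 hy2); first by left.
    + by rewrite (dC_isg hx hy1) /dCf hs1 eqxx ev_mono.
    + by rewrite (dC_isg hx hy2) /dCf hs1 eqxx ev_mono.
    move=> y n1 n2; rewrite (dC_isgx _ hx) /dCf.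
    case E: (val y).1; repeat case: ifP => ?; kill y y1 hy1 y2 hy2 n1 n2.
  case: (leqP s n) => hs2.
    have [y1 hy1] := @gen KA s (ltac:(rewrite /cv; lia)).
    have [y2 hy2] := @gen KA s.+1 (ltac:(rewrite /cv; lia)).
    have hs1' : (s <= n - 2)%N = false by lia.
    apply: (two y1 y2 _ _ _ _ hy1 hy2); first by right; lia.
    + by rewrite (dC_isg hx hy1) /dCf hs1' hs2 eqxx ev_mono.
    + rewrite (dC_isg hx hy2) /dCf hs1' hs2 eqxx.
      by rewrite (_ : (s.+1 == s)%N = false) ?ev_mono //; lia.
    move=> y n1 n2; rewrite (dC_isgx _ hx) /dCf.
    case E: (val y).1; repeat case: ifP => ?; kill y y1 hy1 y2 hy2 n1 n2.
  have [y1 hy1] := @gen KA s (ltac:(rewrite /cv; lia)).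
  have [y2 hy2] := @gen KAt s (ltac:(rewrite /cv; lia)).
  have hs1' : (s <= n - 2)%N = false by lia.
  have hs2' : (s <= n)%N = false by lia.
  have hs3 : (n + 1 <= s)%N = true by lia.
  apply: (two y1 y2 _ _ _ _ hy1 hy2); first by left.
  + by rewrite (dC_isg hx hy1) /dCf hs1' hs2' eqxx ev_mono.
  + by rewrite (dC_isg hx hy2) /dCf hs1' hs3 eqxx ev_mono.
  move=> y n1 n2; rewrite (dC_isgx _ hx) /dCf.
  case E: (val y).1; repeat case: ifP => ?; kill y y1 hy1 y2 hy2 n1 n2.
- have [y1 hy1] := @gen KA s.+1 (ltac:(rewrite /cv; lia)).
  have [y2 hy2] := @gen KAt s (ltac:(rewrite /cv; lia)).
  apply: (two y1 y2 _ _ _ _ hy1 hy2); first by left.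
  + by rewrite (dC_isg hx hy1) /dCf eqxx ev_mono.
  + by rewrite (dC_isg hx hy2) /dCf eqxx ev_mono.
  move=> y n1 n2; rewrite (dC_isgx _ hx) /dCf.
  case E: (val y).1; repeat case: ifP => ?; kill y y1 hy1 y2 hy2 n1 n2.
Qed.

Lemma not_bdry n (hn : (3 <= n)%N) (an : Cgen n) (t : Cgen n -> K) : lvec t ->
  ~ (forall y, toK (if y == an then 1 else 0) = lapp (dC n) t y).
Proof.
move=> ht heq.
have : forall x, exists p : nat * nat * R, toK (mono p.1.1 p.1.2) * t x = toK p.2.
  by move=> x; case: (ht x) => a [b [r h]]; exists (a, b, r).
case/fin_all_exists => F hF.
pose m x := mono (F x).1.1 (F x).1.2.
have [P hPdef] : {P : R | P = \prod_x m x} by exists (\prod_x m x).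
have hP : forall x, toK P * t x = toK ((F x).2 * \prod_(x' | x' != x) m x').
  move=> x; rewrite hPdef (bigD1 x) //= [toK (m x * _)]toKM [toK (_.2 * _)]toKM -hF; exact: mulrAC.
have e1 : \sum_y toK (if y == an then 1 else 0) = 1.
  rewrite -toK_sum -big_mkcond big_pred1_eq; exact: toK1.
have e2 : \sum_y lapp (dC n) t y = \sum_x t x * toK (\sum_y dC n x y).
  rewrite /lapp exchange_big; apply: eq_bigr => x _; by rewrite toK_sum mulr_sumr.
have e3 : toK P = toK (\sum_x ((F x).2 * \prod_(x' | x' != x) m x') * \sum_y dC n x y).
  have e4 : \sum_x t x * toK (\sum_y dC n x y) = 1.
    by rewrite -e2 -e1; apply: eq_bigr => y _; rewrite heq.
  transitivity (toK P * \sum_x t x * toK (\sum_y dC n x y)); first by rewrite e4 mulr1.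
  rewrite mulr_sumr [RHS]toK_sum.
  by apply: eq_bigr => x _; rewrite mulrA hP -toKM.
have := congr1 ev (toK_inj _ _ e3).
rewrite ev_sum (eq_bigr (fun _ => 0)); last by move=> x _; rewrite evM ev_sum_dC // mulr0.
rewrite big1_eq hPdef ev_prod big1 => [|x _]; last by rewrite ev_mono.
by move/eqP; rewrite oner_eq0.
Qed.

Section Apps.
Context {A B C : finType}.

Lemma uapp_comp (phi : A -> B -> R) (psi : B -> C -> R) v z :
  uapp psi (uapp phi v) z = uapp (mcomp phi psi) v z.
Proof.
rewrite /uapp /mcomp.
under eq_bigr => y _ do rewrite mulr_suml.
rewrite exchange_big; apply: eq_bigr => x _.
by rewrite setV1_sum mulr_sumr; apply: eq_bigr => y _; rewrite setV1M mulrA.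
Qed.

Lemma uapp_ext {phi : A -> B -> R} {v v' y} : (forall x, v x = v' x) -> uapp phi v y = uapp phi v' y.
Proof. by move=> h; apply: eq_bigr => x _; rewrite h. Qed.

Lemma uapp_extf {phi phi' : A -> B -> R} {v y} : (forall x y, phi x y = phi' x y) ->
  uapp phi v y = uapp phi' v y.
Proof. by move=> h; apply: eq_bigr => x _; rewrite h. Qed.

Lemma uapp_scale (phi : A -> B -> R) c v y : uapp phi (fun x => c * v x) y = c * uapp phi v y.
Proof. by rewrite /uapp mulr_sumr; apply: eq_bigr => x _; rewrite mulrA. Qed.

Lemma uapp_sub (phi : A -> B -> R) v w y :
  uapp phi (fun x => v x - w x) y = uapp phi v y - uapp phi w y.
Proof. by rewrite /uapp -sumrB; apply: eq_bigr => x _; rewrite mulrBl. Qed.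

Lemma uapp_e (phi : A -> B -> R) a y :
  uapp phi (fun x => if x == a then 1 else 0) y = setV1 (phi a y).
Proof.
rewrite /uapp (bigD1 a) //= eqxx mul1r big1 ?addr0 // => x /negPf ->; exact: mul0r.
Qed.

Lemma uapp0 (phi : A -> B -> R) y : uapp phi (fun _ => 0) y = 0.
Proof. by rewrite /uapp big1 // => x _; rewrite mul0r. Qed.

Lemma lapp_comp (phi : A -> B -> R) (psi : B -> C -> R) v z :
  lapp psi (lapp phi v) z = lapp (mcomp phi psi) v z.
Proof.
rewrite /lapp /mcomp.
under eq_bigr => y _ do rewrite mulr_suml.
rewrite exchange_big; apply: eq_bigr => x _.
by rewrite toK_sum mulr_sumr; apply: eq_bigr => y _; rewrite toKM mulrA.
Qed.

Lemma lapp_ext {phi : A -> B -> R} {v v' y} : (forall x, v x = v' x) -> lapp phi v y = lapp phi v' y.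
Proof. by move=> h; apply: eq_bigr => x _; rewrite h. Qed.

Lemma lapp_extf {phi phi' : A -> B -> R} {v y} : (forall x y, phi x y = phi' x y) ->
  lapp phi v y = lapp phi' v y.
Proof. by move=> h; apply: eq_bigr => x _; rewrite h. Qed.

Lemma lapp_e (phi : A -> B -> R) a y :
  lapp phi (fun x => toK (if x == a then 1 else 0)) y = toK (phi a y).
Proof.
rewrite /lapp (bigD1 a) //= eqxx toK1 mul1r big1 ?addr0 // => x /negPf ->.
by rewrite toK0 mul0r.
Qed.

Lemma lapp0 (phi : A -> B -> R) y : lapp phi (fun _ => 0) y = 0.
Proof. by rewrite /lapp big1 // => x _; rewrite mul0r. Qed.

Lemma inL_toK r : inL (toK r).
Proof. by exists 0%N, 0%N, r; rewrite /mono !expr0 mulr1 toK1 mul1r. Qed.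

End Apps.

Lemma dC_KA0 {n x s} y : isg x KA s -> dC n x y = 0.
Proof. by move=> hx; rewrite (dC_isgx y hx) /dCf; case: (val y).1. Qed.

Lemma mono_div n a b : (n - 1 <= a)%N -> exists q, setV1 (mono a b) = q * 'X^(n - 1).
Proof. by move=> h; exists 'X^(a - (n - 1)); rewrite setV1_mono -exprD subnK. Qed.

Lemma dC_div n (hn : (3 <= n)%N) x y t : isg y KA t ->
  exists q, setV1 (dC n x y) = q * 'X^(n - 1).
Proof.
move=> hy.
have hMN := MM_NN n; have hN := NN_ge hn.
have z0 : exists q, setV1 0 = q * 'X^(n - 1) by exists 0; rewrite setV10 mul0r.
have [k [s hx]] : exists k s, isg x k s by exists (val x).1, (val (val x).2).
rewrite (dC_isg hx hy) /dCf.
case: k hx => hx; repeat case: ifP => ?; try exact: z0; apply: mono_div; lia.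
Qed.

Lemma eb_id n (hn : (3 <= n)%N) b an am y : isg b KB2 (n - 1) -> isg an KA n -> isg am KA (n - 1) ->
  setV1 (dC n b y) = 'X^(MM n - (n - 1)) *
     (if y == an then 1 else if y == am then 'X^(n - 1) else 0).
Proof.
move=> hb han ham.
have hMN := MM_NN n; have hN := NN_ge hn.
have nam : an != am by apply: (isg_neq han ham); right; lia.
case: (eqVneq y an) => [->|n1].
  rewrite (dC_isg hb han) /dCf mulr1.
  rewrite (_ : (n - 1 <= n - 2)%N = false); last lia.
  rewrite (_ : (n - 1 <= n)%N = true); last lia.
  rewrite (_ : (n == n - 1)%N = false); last lia.
  rewrite (_ : (n == (n - 1).+1)%N = true); last lia.
  exact: setV1_mono.
case: (eqVneq y am) => [->|n2].
  rewrite (dC_isg hb ham) /dCf.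
  rewrite (_ : (n - 1 <= n - 2)%N = false); last lia.
  rewrite (_ : (n - 1 <= n)%N = true); last lia.
  by rewrite eqxx setV1_mono -exprD subnK //; lia.
rewrite mulr0 (dC_isgx y hb) /dCf.
case E: (val y).1; repeat case: ifP => ?; try by rewrite setV10.
all: exfalso; first [
  (move/negP: n2; apply; apply/eqP; apply: (gen_eq (isg_self y) _);
   move: ham; rewrite /isg => -[-> ->]; split=> //; lia)
| (move/negP: n1; apply; apply/eqP; apply: (gen_eq (isg_self y) _);
   move: han; rewrite /isg => -[-> ->]; split=> //; lia)
| lia ].
Qed.


Theorem lemma2p12 (n : nat) (hn : (3 <= n)%N)
  (grC : Cgen n -> int * int) (hgrC : homogeneous grC grC (dC n) (-1, -1))
  (B : finType) (grD : B -> int * int) (dD : B -> B -> R)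
  (hD : is_complex grD dD) (hknot : knotlike dD)
  (f : Cgen n -> B -> R) (hf : local_map grC (dC n) grD dD f) :
  ~ exists g : B -> Cgen n -> R,
      local_map grD dD grC (dC n) g /\
      exists c1 c2 : int,
        homogeneous grC grC (mcomp f g) (c1, c2) /\
        - (2 * n)%:Z + 2 < c1 /\ - (2 * n)%:Z < c2.
Proof.
move=> [g [[[cg hgh] [hgc hgl]] [c1 [c2 [hH [hc1 hc2]]]]]].
case: hf => [[cf hfh] [hfc hfl]].
have gen k s (h : cv n k s) := @exists_gen n k s (leq_trans (isT : (1 <= 3)%N) hn) h.
have [an han] := gen KA n (ltac:(rewrite /cv; lia)).
have [am ham] := gen KA (n - 1)%N (ltac:(rewrite /cv; lia)).
have [b hb] := gen KB2 (n - 1)%N (ltac:(rewrite /cv; lia)).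
have hzero : forall y, y != an -> mcomp f g an y = 0.
  move=> y hy; case: (hH an y) => [//|[a [b' [e [e1 e2]]]]].
  have hy' : y <> an by move=> h; move/eqP: hy.
  have := @gbound n hn grC hgrC y an han hy'.
  rewrite /= in e1 e2; lia.
have hk : exists k l, mcomp f g an an = mono k l /\ (k <= n - 2)%N.
  case: (hH an an) => [h0|[k [l [e [e1 e2]]]]]; last first.
    by exists k, l; split => //; rewrite /= in e1; lia.
  exfalso.
  pose w := fun x : Cgen n => toK (if x == an then 1 else 0).
  have hw : lvec w by move=> x; exact: inL_toK.
  have hwc : forall x, lapp (dC n) w x = 0.
    by move=> x; rewrite /w lapp_e (dC_KA0 _ han) toK0.
  pose w' := lapp f w.
  have hw' : lvec w' by move=> x; rewrite /w' lapp_e; exact: inL_toK.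
  have hw'c : forall y, lapp dD w' y = 0.
    move=> y; rewrite /w' lapp_comp (lapp_extf (fun x z => esym (hfc x z))).
    by rewrite -lapp_comp (lapp_ext hwc) lapp0.
  have hex : exists u, lvec u /\ forall y, lapp g w' y = lapp (dC n) u y.
    exists (fun _ => 0); split; first by move=> x; rewrite -toK0; exact: inL_toK.
    move=> y; rewrite lapp0 /w' lapp_comp lapp_e.
    case: (eqVneq y an) => [->|hy]; first by rewrite h0 toK0.
    by rewrite hzero // toK0.
  have [t [ht htw]] := hgl.2 w' hw' hw'c hex.
  have hex2 : exists u, lvec u /\ forall y, lapp f w y = lapp dD u y.
    by exists t; split.
  have [t' [ht' ht'w]] := hfl.2 w hw hwc hex2.
  exact: (not_bdry _ hn an _ ht' ht'w).
case: hk => k [l [hkl hkn]].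
case: hknot => z [hz [hspan hfree]].
pose tau := fun x : Cgen n => if x == an then 1 else if x == am then 'X^(n - 1) else 0 : {poly F2}.
have htc : forall y, uapp (dC n) tau y = 0.
  move=> y; rewrite /uapp big1 // => x _; rewrite /tau.
  case: eqP => [->|_]; first by rewrite (dC_KA0 _ han) setV10 mulr0.
  case: eqP => [->|_]; first by rewrite (dC_KA0 _ ham) setV10 mulr0.
  by rewrite mul0r.
pose Fv := uapp f tau.
have hFc : forall y, uapp dD Fv y = 0.
  move=> y; rewrite /Fv uapp_comp (uapp_extf (fun x z => esym (hfc x z))).
  by rewrite -uapp_comp (uapp_ext htc) uapp0.
have [p [u hpu]] := hspan Fv hFc.
pose c := 'X^(MM n - (n - 1)) : {poly F2}.
pose eb := fun x : Cgen n => if x == b then 1 else 0 : {poly F2}.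
have heb : forall y, uapp (dC n) eb y = c * tau y.
  by move=> y; rewrite /eb uapp_e (eb_id n hn b an am y hb han ham).
have h1 : forall y, c * Fv y = uapp dD (uapp f eb) y.
  move=> y; rewrite /Fv -uapp_scale (uapp_ext (fun x => esym (heb x))).
  by rewrite uapp_comp (uapp_extf hfc) -uapp_comp.
have hp : c * p = 0.
  apply: (hfree (c * p) (fun x => uapp f eb x - c * u x)) => y.
  rewrite uapp_sub uapp_scale -h1 hpu; ring.
have p0 : p = 0.
  by move/eqP: hp; rewrite mulf_eq0 expf_eq0 polyX_eq0 andbF /= => /eqP.
have hFv : forall y, Fv y = uapp dD u y by move=> y; rewrite hpu p0 mul0r add0r.
have hHt : forall y, uapp (mcomp f g) tau y = uapp (dC n) (uapp g u) y.
  move=> y; rewrite -uapp_comp (uapp_ext hFv) uapp_comp (uapp_extf hgc).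
  by rewrite -uapp_comp.
have [Q hQ] := fin_all_exists (fun x => dC_div n hn x an n han).
have eR : uapp (dC n) (uapp g u) an = (\sum_x uapp g u x * Q x) * 'X^(n - 1).
  by rewrite /uapp mulr_suml; apply: eq_bigr => x _; rewrite hQ mulrA.
have eL : uapp (mcomp f g) tau an = 'X^k +
    (\sum_(x | x != an) (if x == am then 1 else 0) * setV1 (mcomp f g x an)) * 'X^(n - 1).
  rewrite /uapp (bigD1 an) //= /tau eqxx mul1r hkl setV1_mono; congr (_ + _).
  rewrite mulr_suml; apply: eq_bigr => x /negPf ->.
  by case: ifP => _; rewrite ?mul1r ?mul0r // mulrC.
have := hHt an; rewrite eL eR => /(congr1 (fun q : {poly F2} => q`_k)).
rewrite coefD coefXn eqxx !coefMXn (_ : (k < n - 1)%N = true); last lia.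
by rewrite addr0 => /eqP; rewrite oner_eq0.
Qed.
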